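(* Let $0<\alpha<1/2$, $p=n^{-\alpha}$, fix an integer $l\ge 1$, set $m=\lfloor (n-1)/(l+2)\rfloor$, and fix (for each $n$) a family of pairwise disjoint sets of coordinates $A,B,C_1,\dots,C_l\subset\{1,\dots,n\}$, each of size $m$. Call a vertex $v$ of $H_{n,p}$ good if there are at least $2m$ distinct vertices $w$ such that $w$ differs from $v$ in exactly two coordinates, both belonging to $A$, and $d_{H_{n,p}}(v,w)=2$. Then, with probability tending to $1$ as $n\to\infty$, every vertex $v$ of $H_n$ has a good vertex $u$ that differs from $v$ in exactly one coordinate, that coordinate belonging to $B$.
   Context: $H_n$ is the hypercube graph on $\{0,1\}^n$ (vectors adjacent iff they differ in exactly one coordinate). $H_{n,p}$ is obtained from $H_n$ by Bernoulli bond percolation: each edge is kept independently with probability $p$; $d_{H_{n,p}}$ denotes the graph distance in $H_{n,p}$. *)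

(* Defs.v *)
From HB Require Import structures.
From mathcomp Require Import all_boot all_order all_algebra.
From mathcomp Require Import all_classical all_reals all_analysis.
Set Implicit Arguments. Unset Strict Implicit. Unset Printing Implicit Defensive.
Import Order.TTheory GRing.Theory Num.Theory.
Local Open Scope ring_scope.

Notation hvert n := {ffun 'I_n -> bool}.

Definition hdiff n (v w : hvert n) : {set 'I_n} := [set i | v i != w i].

Definition hadj n (v w : hvert n) : bool := #|hdiff v w| == 1%N.

Definition hedges n : {set {set hvert n}} :=
  [set e | [exists v : hvert n, exists w : hvert n, hadj v w && (e == [set v; w])]].

(* A percolation configuration is a subset S of the edges of H_n (the kept edges).
   Probability of an event under Bernoulli(p) bond percolation. *)
Definition perc_prob (R : realType) n (p : R) (E : pred {set {set hvert n}}) : R :=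
  \sum_(S in powerset (hedges n) | E S)
     p ^+ #|S| * (1 - p) ^+ (#|hedges n| - #|S|).

Definition walk n (S : {set {set hvert n}}) (k : nat) (v w : hvert n) : bool :=
  [exists s : k.-tuple (hvert n),
     path (fun x y => [set x; y] \in S) v s && (last v s == w)].

Definition dist_eq n (S : {set {set hvert n}}) (v w : hvert n) (k : nat) : bool :=
  walk S k v w && [forall j : 'I_k, ~~ walk S j v w].

Definition good n (m : nat) (A : {set 'I_n}) (S : {set {set hvert n}}) (v : hvert n) : bool :=
  (2 * m <= #|[set w : hvert n | [&& #|hdiff v w| == 2, hdiff v w \subset A
                                    & dist_eq S v w 2]]|)%N.

Definition event4 n (m : nat) (A B : {set 'I_n}) (S : {set {set hvert n}}) : bool :=
  [forall v : hvert n, exists u : hvert n,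
     [&& #|hdiff v u| == 1%N, hdiff v u \subset B & good m A S u]].

(* Main.v *)
Require Import Defs.
From HB Require Import structures.
From mathcomp Require Import all_boot all_order all_algebra.
From mathcomp Require Import all_classical all_reals all_analysis.
From mathcomp Require Import ring lra zify.
Import Order.TTheory GRing.Theory Num.Theory.
Local Open Scope ring_scope.
Import numFieldNormedType.Exports.
Notation fsubsetP := fintype.subsetP.
Notation fsubsetPn := fintype.subsetPn.
Notation set0 := finset.set0.
Notation setIidPr := finset.setIidPr.
Notation subUset := finset.subUset.

Section Prob.
Variables (R : realType) (n : nat) (p : R).
Local Notation E := {set {set hvert n}}.

Lemma pp_disj (G : E) : G \subset hedges n ->
  perc_prob p (fun S => [disjoint G & S]) = (1 - p) ^+ #|G|.
Proof.
move=> sG.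
pose F e : R := if (e \in hedges n) && (e \notin G) then p else 0.
pose H e : R := if e \in hedges n then 1 - p else 1.
have := @bigA_distr R 0 1 (@GRing.mul R : Monoid.mul_law 0) (@GRing.add R : Monoid.add_law 0 _) _ F H.
have -> : \prod_e (F e + H e) = (1 - p) ^+ #|G|.
  rewrite (bigID (fun e => e \in G)) /=.
  rewrite [X in _ * X]big1 ?mulr1; last first.
    move=> e /negbTE eG; rewrite /F /H eG andbT.
    by case: ifP => _; rewrite ?add0r // addrC subrK.
  rewrite -prodr_const; apply: eq_bigr => e eG.
  by rewrite /F /H eG andbF (fsubsetP sG e eG) add0r.
move=> ->; rewrite /perc_prob.
rewrite [RHS](bigID (fun S : E => (S \in powerset (hedges n)) && [disjoint G & S])) /=.
rewrite [X in _ = _ + X]big1 ?addr0; last first.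
  move=> S /negbTE HS.
  have [e eS He]: exists2 e, e \in S & ~~ ((e \in hedges n) && (e \notin G)).
    move: HS; rewrite powersetE.
    case/nandP=> [/fsubsetPn [e eS eh]|/pred0Pn [e /andP [eG eS]]].
      by exists e => //; rewrite (negbTE eh).
    by exists e => //; move: eG => /= ->; rewrite andbF.
  by rewrite (bigD1 e) //= eS /F (negbTE He) mul0r.
apply: eq_bigr => S /andP [HS dS].
rewrite (bigID (fun e => e \in S)) /=.
have sS : S \subset hedges n by rewrite -powersetE.
congr (_ * _).
  rewrite -prodr_const; apply: eq_bigr => e eS.
  rewrite eS /F (fsubsetP sS e eS).
  have -> // : e \notin G.
  by apply/negP => eG; move/pred0P: dS => /(_ e) /=; rewrite eG eS.
rewrite (eq_bigr (fun e => if e \in hedges n then 1 - p else 1)); last first.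
  by move=> e /negbTE ->.
rewrite -big_mkcondr /=.
rewrite (eq_bigl (fun e => e \in [set e in hedges n | e \notin S])); last first.
  by move=> e; rewrite !inE andbC.
rewrite prodr_const; congr (_ ^+ _).
have := cardsID S (hedges n).
rewrite (finset.setIidPr sS) => <-.
rewrite addKn; apply: eq_card => e; rewrite !inE andbC.
by [].
Qed.


Lemma pp_total : \sum_(S in powerset (hedges n)) p ^+ #|S| * (1 - p) ^+ (#|hedges n| - #|S|) = 1.
Proof.
have := @pp_disj finset.set0 (finset.sub0set (hedges n)).
rewrite cards0 expr0 /perc_prob => H; rewrite -[RHS]H.
have d0 : forall S : E, [disjoint finset.set0 & S] by move=> S; apply/pred0P=> e /=; rewrite inE.
by apply: eq_bigl => S; rewrite d0 andbT.
Qed.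

Lemma pp_compl (P : pred E) : perc_prob p P = 1 - perc_prob p (predC P).
Proof.
rewrite -pp_total (bigID P) /= /perc_prob addrK.
by [].
Qed.

Hypothesis p01 : 0 <= p <= 1.

Lemma weight_ge0 (S : E) : 0 <= p ^+ #|S| * (1 - p) ^+ (#|hedges n| - #|S|).
Proof.
case/andP: p01 => p0 p1.
by apply: mulr_ge0; apply: exprn_ge0; rewrite ?subr_ge0.
Qed.

Lemma pp_ge0 (P : pred E) : 0 <= perc_prob p P.
Proof. by apply: sumr_ge0 => S _; apply: weight_ge0. Qed.

Lemma pp_union (I : finType) (P : pred E) (Q : I -> pred E) :
  (forall S : E, S \subset hedges n -> P S -> exists i, Q i S) ->
  perc_prob p P <= \sum_i perc_prob p (Q i).
Proof.
move=> HPQ; rewrite /perc_prob.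
rewrite [X in _ <= X](eq_bigr (fun i => \sum_(S in powerset (hedges n)) (if Q i S then p ^+ #|S| * (1 - p) ^+ (#|hedges n| - #|S|) else 0))); last by move=> i _; rewrite big_mkcondr.
rewrite [X in _ <= X]exchange_big /= big_mkcondr /=.
apply: ler_sum => S HS.
case PS: (P S); last by apply: sumr_ge0 => i _; case: ifP => _ //; apply: weight_ge0.
have [i Qi] := HPQ S (eq_ind _ is_true HS _ (powersetE _ _)) PS.
rewrite (bigD1 i) //= Qi ler_wpDr //.
by apply: sumr_ge0 => j _; case: ifP => _ //; apply: weight_ge0.
Qed.


Lemma pp_eq (P Q : pred E) : (forall S, P S = Q S) -> perc_prob p P = perc_prob p Q.
Proof. by move=> h; apply: eq_bigl => S; rewrite h. Qed.

Lemma disjUs (A B C : E) : [disjoint A :|: B & C] = [disjoint A & C] && [disjoint B & C].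
Proof. by rewrite -!setI_eq0 finset.setIUl finset.setU_eq0. Qed.

Lemma cardsU_disj (A B : E) : [disjoint A & B] -> #|A :|: B| = (#|A| + #|B|)%N.
Proof. by move=> /disjoint_setI0 h; rewrite cardsU h cards0 subn0. Qed.

Lemma pp_prod (I J : finType) (F : I -> J -> E) (bs : seq I) (G : E) :
  uniq bs ->
  G \subset hedges n ->
  (forall b j, b \in bs -> F b j \subset hedges n) ->
  (forall b j, b \in bs -> [disjoint G & F b j]) ->
  {in bs &, forall b b', b != b' -> forall j j', [disjoint F b j & F b' j']} ->
  perc_prob p (fun S => [disjoint G & S] && all (fun b => [exists j, [disjoint F b j & S]]) bs)
  <= (1 - p) ^+ #|G| * \prod_(b <- bs) \sum_j (1 - p) ^+ #|F b j|.
Proof.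
case/andP: p01 => p0 p1.
elim: bs G => [|b0 bs IH] G /= ubs sG sF dG dF.
  rewrite big_nil mulr1 -(pp_disj _ sG); rewrite le_eqVlt; apply/orP; left; apply/eqP/pp_eq => S.
  by rewrite andbT.
case/andP: ubs => b0bs ubs.
apply: le_trans (@pp_union J _ (fun j S => [disjoint G :|: F b0 j & S] &&
    all (fun b => [exists j, [disjoint F b j & S]]) bs) _) _.
  move=> S _ /andP [dGS /andP [/existsP [j dj] Hall]].
  by exists j; rewrite disjUs dGS dj.
rewrite big_cons mulrA mulr_sumr mulr_suml; apply: ler_sum => j _.
apply: le_trans (IH _ ubs _ _ _ _) _.
- by rewrite finset.subUset sG sF // mem_head.
- by move=> b j' bb; apply: sF; rewrite inE bb orbT.
- move=> b j' bb; rewrite disjUs dG ?inE ?bb ?orbT //=.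
  apply: dF; rewrite ?inE ?bb ?eqxx ?orbT //.
  by apply/eqP => eb; move: b0bs; rewrite eb bb.
- by move=> b b' bb bb'; apply: dF; rewrite inE ?bb ?bb' orbT.
rewrite cardsU_disj; last by apply: dG; rewrite mem_head.
by rewrite exprD.
Qed.

End Prob.

Section Cube.
Variable n : nat.
Local Notation V := (hvert n).

Definition flip (u : V) (c : 'I_n) : V := [ffun i => if i == c then ~~ u i else u i].

Lemma flipE (u : V) c i : flip u c i = if i == c then ~~ u i else u i.
Proof. by rewrite ffunE. Qed.

Lemma hdiff_flip (u : V) c : hdiff u (flip u c) = [set c].
Proof.
apply/setP => i; rewrite !inE flipE; case: (i == c) => //.
by case: (u i).
by rewrite eqxx.
Qed.

Lemma hdiff_flip2 (u : V) c d : c != d -> hdiff u (flip (flip u c) d) = [set c; d].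
Proof.
move=> cd; apply/setP => i; rewrite !inE !flipE.
have dc : d != c by rewrite eq_sym.
case: (eqVneq i d) => [->|id]. rewrite (negbTE dc) orbT. by case: (u d). rewrite orbF.
case: (i == c) => /=; first by case: (u i).
by rewrite eqxx.
Qed.

Lemma hdiff_sym (u w : V) : hdiff u w = hdiff w u.
Proof. by apply/setP => i; rewrite !inE eq_sym. Qed.

Lemma hdiff0 (u : V) : hdiff u u = set0.
Proof. by apply/setP => i; rewrite !inE eqxx. Qed.

Lemma flip_neq (u : V) c : flip u c != u.
Proof.
apply/eqP => h; have := congr1 (fun w : V => w c) h; rewrite /= flipE eqxx.
by case: (u c).
Qed.

Lemma flip_inj (u : V) c d : flip u c = flip u d -> c = d.
Proof.
move=> h; have := congr1 (hdiff u) h; rewrite !hdiff_flip => /setP /(_ c).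
by rewrite !inE eqxx => /esym /eqP.
Qed.

Lemma edge_in (u : V) c : [set u; flip u c] \in hedges n.
Proof.
rewrite inE; apply/existsP; exists u; apply/existsP; exists (flip u c).
by rewrite /hadj hdiff_flip cards1 !eqxx.
Qed.

Lemma edge_inj (u : V) c d : [set u; flip u c] = [set u; flip u d] -> c = d.
Proof.
move=> /setP /(_ (flip u c)); rewrite !inE eqxx orbT (negbTE (flip_neq u c)) /=.
by move=> /esym /eqP /flip_inj.
Qed.

Lemma hedge_adj (x y : V) : [set x; y] \in hedges n -> hadj x y.
Proof.
rewrite inE => /existsP [v /existsP [w /andP [hvw /eqP e]]].
have xin : x \in [set v; w] by rewrite -e !inE eqxx.
have yin : y \in [set v; w] by rewrite -e !inE eqxx orbT.
have vin : v \in [set x; y] by rewrite e !inE eqxx.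
have win : w \in [set x; y] by rewrite e !inE eqxx orbT.
move: xin yin vin win; rewrite !inE.
move: hvw; rewrite /hadj.
case/orP: (orbN (v == w)) => [/eqP ->|vw]; first by rewrite hdiff0 cards0.
move=> hvw /orP [] /eqP ex /orP [] /eqP ey; subst x y => //.
- by move=> _; rewrite orbb eq_sym (negbTE vw).
- by rewrite hdiff_sym.
- by rewrite orbb (negbTE vw).
Qed.


Lemma dist2 (S : {set {set V}}) (u x w : V) :
  S \subset hedges n -> #|hdiff u w| = 2%N ->
  [set u; x] \in S -> [set x; w] \in S -> dist_eq S u w 2.
Proof.
move=> sS hw ux xw; apply/andP; split.
  apply/existsP; exists [tuple x; w]; rewrite /= ux xw /=.
  by [].
apply/forallP => j; case: j => [[|[|j]]] //= _.
  apply/negP => /existsP [t]; rewrite (tuple0 t) /= => /eqP uw.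
  by move: hw; rewrite uw hdiff0 cards0.
apply/negP => /existsP [[[|y [|]]] //= _] /andP [/andP [uy _] /eqP yw].
have := @hedge_adj u y (fsubsetP sS _ uy); rewrite yw /hadj hw.
by [].
Qed.

Variables (A : {set 'I_n}) (K s : nat) (P Q : 'I_K -> 'I_s -> 'I_n).
Hypothesis PA : forall k i, P k i \in A.
Hypothesis QA : forall k i, Q k i \in A.
Hypothesis Pinj : forall k i k' i', P k i = P k' i' -> k = k' /\ i = i'.
Hypothesis Qinj : forall k i k' i', Q k i = Q k' i' -> k = k' /\ i = i'.
Hypothesis PQ : forall k i k' i', P k i != Q k' i'.

Local Notation Jt := ('I_K + ('I_K * 'I_s * 'I_K))%type.

Definition Fam (u : V) (j : Jt) : {set {set V}} :=
  match j with
  | inl k => [set [set u; flip u (P k i)] | i : 'I_s]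
  | inr (k, i, l) => [set [set flip u (P k i); flip (flip u (P k i)) (Q l i')] | i' : 'I_s]
  end.

Lemma Fam_card u j : #|Fam u j| = s.
Proof.
case: j => [k|[[k i] l]] /=; rewrite card_imset ?card_ord //.
  by move=> i i' /edge_inj /Pinj [].
by move=> i1 i2 /edge_inj /Qinj [].
Qed.

Lemma Fam_sub u j : Fam u j \subset hedges n.
Proof.
apply/fsubsetP => e; case: j => [k|[[k i] l]] /= /imsetP [i' _ ->]; exact: edge_in.
Qed.

Lemma Fam_vert u j e x i : e \in Fam u j -> x \in e -> i \notin A -> x i = u i.
Proof.
have fl : forall (y : V) c, c \in A -> i \notin A -> flip y c i = y i.
  move=> y c cA iA; rewrite flipE; case: eqP => // ic.
  by move: iA; rewrite ic cA.
case: j => [k|[[k i0] l]] /= /imsetP [i' _ ->]; rewrite !inE => /orP [] /eqP -> iA //.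
- by rewrite fl.
- by rewrite fl.
- by rewrite !fl.
Qed.

Lemma Fam_ne u j e : e \in Fam u j -> exists x, x \in e.
Proof.
by case: j => [k|[[k i0] l]] /= /imsetP [i' _ ->]; eexists; apply: set21.
Qed.

Lemma good_suff (m : nat) (S : {set {set V}}) (u : V) :
  S \subset hedges n -> (2 * m <= K * K)%N ->
  (forall j, ~~ [disjoint Fam u j & S]) -> good m A S u.
Proof.
move=> sS Km hF.
have h1 : forall k : 'I_K, exists i : 'I_s, [set u; flip u (P k i)] \in S.
  move=> k; have /pred0Pn [e /andP [/= eF eS]] := hF (inl k).
  by case/imsetP: eF => i _ ei; exists i; rewrite -ei.
have [c hc] := fin_all_exists h1.
have h2 : forall kl : 'I_K * 'I_K, exists i' : 'I_s,
    [set flip u (P kl.1 (c kl.1)); flip (flip u (P kl.1 (c kl.1))) (Q kl.2 i')] \in S.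
  move=> [k l]; have /pred0Pn [e /andP [/= eF eS]] := hF (inr (k, c k, l)).
  by case/imsetP: eF => i _ ei; exists i; rewrite -ei.
have [d hd] := fin_all_exists h2.
pose w (kl : 'I_K * 'I_K) := flip (flip u (P kl.1 (c kl.1))) (Q kl.2 (d kl)).
have hw kl : hdiff u (w kl) = [set P kl.1 (c kl.1); Q kl.2 (d kl)].
  by rewrite hdiff_flip2.
have winj : injective w.
  move=> [k l] [k' l'] e; have := congr1 (hdiff u) e; rewrite !hw /= => e2.
  have : P k (c k) \in [set P k' (c k'); Q l' (d (k', l'))] by rewrite -e2 !inE eqxx.
  rewrite !inE (negbTE (PQ _ _ _ _)) orbF => /eqP /Pinj [ek _].
  have : Q l (d (k, l)) \in [set P k' (c k'); Q l' (d (k', l'))] by rewrite -e2 !inE eqxx orbT.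
  rewrite !inE eq_sym (negbTE (PQ _ _ _ _)) /= => /eqP /Qinj [el _].
  by rewrite ek el.
rewrite /good; apply: leq_trans Km _.
have -> : (K * K)%N = #|[set w kl | kl in [set: 'I_K * 'I_K]]|.
  by rewrite card_imset // cardsT card_prod card_ord.
apply: subset_leq_card; apply/fsubsetP => x /imsetP [[k l] _ ->].
have ck : #|hdiff u (w (k, l))| = 2%N by rewrite hw cards2 PQ.
rewrite inE ck eqxx /=; apply/andP; split.
  by rewrite hw; apply/fsubsetP => y; rewrite !inE => /orP [] /eqP ->.
apply: (@dist2 S u (flip u (P k (c k))) (w (k, l)) sS ck); [exact: hc k | exact: hd (k, l)].
Qed.

End Cube.

Lemma disj0 (T : finType) (S : {set T}) : [disjoint set0 & S].
Proof. by apply/pred0P => e /=; rewrite inE. Qed.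

Lemma card_hvert n : #|hvert n| = (2 ^ n)%N.
Proof. by rewrite card_ffun card_bool card_ord. Qed.

Lemma bound (R : realType) (p : R) n m (A B : {set 'I_n}) K s
  (P Q : 'I_K -> 'I_s -> 'I_n) :
  0 <= p <= 1 -> #|B| = m -> [disjoint A & B] ->
  (forall k i, P k i \in A) -> (forall k i, Q k i \in A) ->
  (forall k i k' i', P k i = P k' i' -> k = k' /\ i = i') ->
  (forall k i k' i', Q k i = Q k' i' -> k = k' /\ i = i') ->
  (forall k i k' i', P k i != Q k' i') ->
  (2 * m <= K * K)%N ->
  perc_prob p (predC (event4 m A B)) <=
    (2 ^ n)%:R * ((1 - p) ^+ s *+ #|{: 'I_K + ('I_K * 'I_s * 'I_K)}|) ^+ m.
Proof.
move=> p01 cB dAB PA QA Pinj Qinj PQ Km.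
have BnA : forall b, b \in B -> b \notin A.
  by move=> b bB; apply/negP => bA; move/pred0P: dAB => /(_ b) /=; rewrite bA bB.
pose F (v : hvert n) (b : 'I_n) j := Fam n K s P Q (flip n v b) j.
apply: le_trans (@pp_union R n p p01 (hvert n) _ (fun v S => [disjoint set0 & S] &&
   all (fun b => [exists j, [disjoint F v b j & S]]) (enum B)) _) _.
  move=> S sS /= /forallPn [v /existsPn hv]; exists v; rewrite disj0 /=.
  apply/allP => b; rewrite mem_enum => bB.
  apply: contraT => /existsPn hj.
  have := hv (flip n v b); rewrite hdiff_flip cards1 eqxx finset.sub1set bB /=.
  by rewrite (@good_suff n A K s P Q PA QA Pinj Qinj PQ m S (flip n v b) sS Km hj).
have eqT : forall v : hvert n, (1 - p) ^+ #|@set0 {set hvert n}| *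
   \prod_(b <- enum B) \sum_j (1 - p) ^+ #|F v b j| = ((1 - p) ^+ s *+ #|{: 'I_K + ('I_K * 'I_s * 'I_K)}|) ^+ m.
  move=> v; rewrite cards0 expr0 mul1r big_enum /= -cB -prodr_const.
  apply: eq_bigr => b _; rewrite -sumr_const; apply: eq_bigr => j _.
  by rewrite /F /= Fam_card.
rewrite mulr_natl -(card_hvert n) -sumr_const.
apply: ler_sum => v _; rewrite -(eqT v).
apply: pp_prod => //.
- exact: enum_uniq.
- exact: finset.sub0set.
- by move=> b j _; apply: Fam_sub.
- by move=> b j _; apply: disj0.
move=> b b' bB bB' bb' j j'; rewrite mem_enum in bB; rewrite mem_enum in bB'.
apply/pred0P => e /=; apply/negP => /andP [e1 e2].
have [x xe] := @Fam_ne n K s P Q _ _ _ e1.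
have h1 := @Fam_vert n A K s P Q PA QA _ _ _ _ _ e1 xe (BnA b bB).
have h2 := @Fam_vert n A K s P Q PA QA _ _ _ _ _ e2 xe (BnA b bB).
move: h1 h2; rewrite !flipE eqxx (negbTE bb') => -> .
by case: (v b).
Qed.

Lemma real_est (R : realType) (a : R) (l q n s m : nat) :
  0 < a -> 4%:R <= q%:R * (1 - 2 * a) -> (0 < q)%N -> (1 <= n)%N ->
  (n <= 2 * (l + 2) * m)%N -> (m < 128 * s * s)%N ->
  (2 ^ (l + 5) * (2 * q)`! * (256 * (l + 2)) ^ q <= n)%N ->
  (2 ^ (l + 5))%:R * (n%:R ^+ 3) * (1 - n%:R `^ (- a)) ^+ s <= 1 :> R.
Proof.
move=> a0 hq q0 n1 hnm hms hN.
set N : R := n%:R.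
have N1 : 1 <= N by rewrite /N ler1n.
have N0 : 0 < N by apply: lt_le_trans N1.
set p := N `^ (- a).
have p0 : 0 < p by apply: powR_gt0.
have p1 : p <= 1.
  by rewrite /p -(powRr0 N); apply: ler_powR => //; rewrite oppr_le0 ltW.
set y := p * s%:R.
have y0 : 0 <= y by apply: mulr_ge0; [apply: ltW | apply: ler0n].
set C : R := (2 ^ (l + 5))%:R * N ^+ 3.
have C0 : 0 <= C by apply: mulr_ge0; [apply: ler0n | apply: exprn_ge0; apply: ltW].
have step1 : (1 - p) ^+ s <= (expR y)^-1.
  rewrite -expRN -mulNr expRM_natr.
  apply: lerXn2r; rewrite ?nnegrE ?subr_ge0 ?expR_ge0 //.
  by have := expR_ge1Dx (- p).
have c0 : 0 < (256 * (l + 2))%:R :> R by rewrite ltr0n muln_gt0 addn_gt0 orbT.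
have step4 : N `^ (1 - 2 * a) / (256 * (l + 2))%:R <= y ^+ 2.
  have e1 : p ^+ 2 * N = N `^ (1 - 2 * a).
    rewrite /p -powR_mulrn ?powR_ge0 // -powRrM.
    rewrite -[X in _ * X](powRr1 (ltW N0)) -powRD; last by apply/implyP => _; rewrite gt_eqF.
    by congr (_ `^ _); lra.
  rewrite -e1 /y exprMn ler_pdivrMr // -[X in _ <= X]mulrA ler_pM2l ?exprn_gt0 //.
  have h1 : N <= (2 * (l + 2) * m)%:R by rewrite ler_nat.
  have h2 : (m%:R : R) <= (128 * s * s)%:R by rewrite ler_nat ltnW.
  apply: (le_trans h1).
  rewrite !natrM in h2 *.
  have : (2 * (l + 2)%:R * m%:R : R) <= 2 * (l + 2)%:R * (128 * s%:R * s%:R) by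
    apply: ler_wpM2l => //; apply: mulr_ge0 => //; apply: ler0n.
  move=> h3; apply: (le_trans h3); rewrite expr2; lra.
have step3 : y ^+ (2 * q) / ((2 * q)`!)%:R <= expR y.
  have := expR_ge1Dxn (2 * q).-1 y0; rewrite prednK ?muln_gt0 //.
  move=> h; apply: le_trans h; rewrite lerDr; lra.
set c : R := (256 * (l + 2))%:R.
set D : R := ((2 * q)`!)%:R.
have D0 : 0 < D by rewrite /D ltr0n fact_gt0.
have step5 : N ^+ 4 / (c ^+ q * D) <= y ^+ (2 * q) / D.
  rewrite exprM invfM mulrA; apply: ler_wpM2r; first by rewrite invr_ge0 ltW.
  have h4 : N ^+ 4 <= N `^ (1 - 2 * a) ^+ q.
    rewrite -[X in _ <= X]powR_mulrn ?powR_ge0 // -powRrM -(powR_mulrn _ (ltW N0)).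
    by apply: ler_powR => //; rewrite mulrC.
    apply: le_trans (_ : (N `^ (1 - 2 * a) / c) ^+ q <= _).
    by rewrite expr_div_n; apply: ler_wpM2r => //; rewrite invr_ge0 exprn_ge0 // ltW.
  apply: lerXn2r; rewrite ?nnegrE ?exprn_ge0 //.
  by apply: divr_ge0; [apply: powR_ge0 | apply: ltW].
have step6 : C <= N ^+ 4 / (c ^+ q * D).
  rewrite ler_pdivlMr ?mulr_gt0 ?exprn_gt0 //.
  have hN' : (2 ^ (l + 5))%:R * c ^+ q * D <= N.
    by rewrite /c /D -natrX -!natrM ler_nat mulnAC.
  have -> : C * (c ^+ q * D) = N ^+ 3 * ((2 ^ (l + 5))%:R * c ^+ q * D) by rewrite /C; ring.
  rewrite [N ^+ 4]exprSr; apply: (@ler_wpM2l _ (N ^+ 3)); [apply: exprn_ge0; exact: ltW | exact: hN'].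
apply: le_trans (_ : C * (expR y)^-1 <= 1).
  by rewrite /C ler_wpM2l.
rewrite ler_pdivrMr ?expR_gt0 // mul1r.
by apply: le_trans step6 (le_trans step5 step3).
Qed.

Local Close Scope ring_scope.
Lemma idx_inj s k k' i i' : (i < s)%N -> (i' < s)%N -> (k * s + i = k' * s + i')%N -> k = k' /\ i = i'.
Proof.
move=> hi hi2 e.
have s0 : (0 < s)%N by apply: leq_ltn_trans hi.
have := congr1 (divn^~ s) e; have := congr1 (modn^~ s) e.
rewrite /= !modnMDl !divnMDl // !modn_small // !divn_small // !addn0.
by move=> -> ->.
Qed.

Lemma build n (A : {set 'I_n}) K s (x0 : 'I_n) : (2 * K * s <= #|A|)%N ->
  exists P Q : 'I_K -> 'I_s -> 'I_n,
  [/\ forall k i, P k i \in A, forall k i, Q k i \in A,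
      forall k i k' i', P k i = P k' i' -> k = k' /\ i = i',
      forall k i k' i', Q k i = Q k' i' -> k = k' /\ i = i'
    & forall k i k' i', P k i != Q k' i'].
Proof.
move=> hA.
pose e := enum A.
have se : size e = #|A| by rewrite cardE.
have ue : uniq e := enum_uniq _.
have bP (k : 'I_K) (i : 'I_s) : (k * s + i < #|A|)%N.
  have := ltn_ord k; have := ltn_ord i; nia.
have bQ (k : 'I_K) (i : 'I_s) : ((K + k) * s + i < #|A|)%N.
  have := ltn_ord k; have := ltn_ord i; nia.
exists (fun k i => nth x0 e (k * s + i)), (fun k i => nth x0 e ((K + k) * s + i)).
split.
- by move=> k i; rewrite -mem_enum mem_nth // se.
- by move=> k i; rewrite -mem_enum mem_nth // se.
- move=> k i k' i' /eqP; rewrite nth_uniq ?se // => /eqP /idx_inj [] //.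
  by move=> h1 h2; split; apply: val_inj.
- move=> k i k' i' /eqP; rewrite nth_uniq ?se // => /eqP /idx_inj [] //.
  by move=> h1 h2; split; apply: val_inj => //; apply/eqP; rewrite -(eqn_add2l K) h1.
- move=> k i k' i'; rewrite nth_uniq ?se //.
  apply/eqP => h; have := ltn_ord k; have := ltn_ord i; nia.
Qed.

Lemma isqrt_ex c m : (0 < c)%N -> exists s, (c * s * s <= m < c * s.+1 * s.+1)%N.
Proof.
move=> c0; elim: m => [|m [s /andP [h1 h2]]]; first by exists 0%N; rewrite !muln1 muln0 c0.
case: (ltnP m.+1 (c * s.+1 * s.+1)) => h3.
  by exists s; rewrite h3 andbT; apply: leq_trans h1 _.
by exists s.+1; rewrite h3 /=; nia.
Qed.

Lemma Kfact m s : (1 <= s)%N -> (32 * s * s <= m)%N -> (2 * m <= (m %/ (2 * s)) * (m %/ (2 * s)))%N.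
Proof.
move=> s1 hm.
set K := m %/ (2 * s).
have hr : (m %% (2 * s) < 2 * s)%N by rewrite ltn_pmod // muln_gt0.
have hd : m = (K * (2 * s) + m %% (2 * s))%N by rewrite /K -divn_eq.
have h32 : (32 * s <= m)%N by nia.
have ha : (15 * m <= 32 * s * K)%N by nia.
have hb : (225 * (m * m) <= (32 * s * K) * (32 * s * K))%N by nia.
have hc : (32 * s * s * m <= m * m)%N by nia.
have hd2 : (225 * 32 * (s * s) * m <= 1024 * (s * s) * (K * K))%N by nia.
have : ((s * s) * (2 * m) <= (s * s) * (K * K))%N by nia.
by rewrite leq_pmul2l // muln_gt0 s1.
Qed.

Lemma natfact l m n : (n <= (l + 2) * m.+1)%N ->
  (2 ^ n * n.+1 <= 2 ^ (l + 3) * (l + 2) * 2 ^ ((l + 4) * m))%N.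
Proof.
move=> hn.
have h1 : (2 ^ n <= 2 ^ (l + 2) * 2 ^ ((l + 2) * m))%N.
  by rewrite -expnD leq_pexp2l //; nia.
have h2 : (n.+1 <= 2 * (l + 2) * 2 ^ m)%N.
  have := ltn_expl m (isT : (1 < 2)%N); nia.
have h3 : (2 ^ ((l + 4) * m) = 2 ^ ((l + 2) * m) * 2 ^ m * 2 ^ m)%N.
  by rewrite -!expnD; congr (_ ^ _); nia.
rewrite h3.
have h4 : (2 ^ (l + 3) = 2 * 2 ^ (l + 2))%N by rewrite -expnS addnS.
rewrite h4.
apply: leq_trans (leq_mul h1 h2) _.
have : (1 <= 2 ^ m)%N by rewrite expn_gt0.
nia.
Qed.


Lemma sq_le s c : (0 < c)%N -> (s <= c * s * s)%N.
Proof. nia. Qed.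

Lemma cJ_bound K s n : (1 <= n)%N -> (K <= n)%N -> (s <= n)%N -> (K + K * s * K <= 2 * n ^ 3)%N.
Proof.
move=> h1 h2 h3; have -> : (n ^ 3 = n * n * n)%N by rewrite !expnS expn0 muln1 mulnA.
have a1 : (K * s * K <= n * n * n)%N by rewrite !leq_mul.
have a2 : (n <= n * n * n)%N by rewrite -mulnA leq_pmulr // muln_gt0 h1.
rewrite mul2n -addnn leq_add //; apply: leq_trans h2 a2.
Qed.

Lemma nm_bound l m n : (1 <= m)%N -> (n <= (l + 2) * m.+1)%N -> (n <= 2 * (l + 2) * m)%N.
Proof. move=> *; nia. Qed.

Lemma ms_bound m s : (1 <= s)%N -> (m < 32 * s.+1 * s.+1)%N -> (m < 128 * s * s)%N.
Proof. move=> *; nia. Qed.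

Local Open Scope ring_scope.
Theorem mainTheorem4 (R : realType) (alpha : R) (l : nat)
  (A B : forall n : nat, {set 'I_n}) (C : forall n : nat, 'I_l -> {set 'I_n}) :
  0 < alpha -> alpha < 1 / 2 -> (1 <= l)%N ->
  (forall n : nat, let m := ((n - 1) %/ (l + 2))%N in
     [/\ #|A n| = m, #|B n| = m & forall i, #|C n i| = m]) ->
  (forall n : nat,
     [/\ [disjoint A n & B n],
         (forall i, [disjoint A n & C n i] /\ [disjoint B n & C n i])
       & forall i j, i != j -> [disjoint C n i & C n j]]) ->
  ((fun n : nat => perc_prob ((n%:R : R) `^ (- alpha))
                    (event4 ((n - 1) %/ (l + 2))%N (A n) (B n))) @ \oo --> (1 : R))%classic.
Proof.
move=> a0 a12 l1 hcard hdisj.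
set q := (Num.Def.archi_bound (4 / (1 - 2 * alpha))).+1.
have ha : 0 < 1 - 2 * alpha by lra.
have hq : 4%:R <= q%:R * (1 - 2 * alpha).
  have := @archi_boundP _ (4 / (1 - 2 * alpha)) (divr_ge0 (ler0n _ 4) (ltW ha)).
  rewrite ltr_pdivrMr // => h; apply: le_trans (ltW h) _.
  by rewrite ler_wpM2r ?(ltW ha) // ler_nat.
have hp01 : forall n, (0 < n)%N -> 0 <= (n%:R : R) `^ (- alpha) <= 1.
  move=> n n0.
  have N1r : (1 : R) <= n%:R by rewrite ler1n.
  rewrite powR_ge0 /= -[X in _ <= X](powRr0 (n%:R : R)); apply: ler_powR => //.
  by rewrite oppr_le0 ltW.
set N1 := (2 ^ (l + 5) * (2 * q)`! * (256 * (l + 2)) ^ q)%N.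
set C1 : R := (2 ^ (l + 3) * (l + 2))%:R.
have ev : forall n, (maxn N1 (32 * (l + 2) + 2) <= n)%N ->
    perc_prob ((n%:R : R) `^ (- alpha)) (predC (event4 ((n - 1) %/ (l + 2))%N (A n) (B n)))
      * n.+1%:R <= C1.
  move=> n; rewrite geq_max => /andP [hN1 hN2].
  have n0 : (0 < n)%N by apply: leq_trans hN2; rewrite addn2.
  set m := ((n - 1) %/ (l + 2))%N.
  have l20 : (0 < l + 2)%N by rewrite addn2.
  have m32 : (32 <= m)%N.
    rewrite /m -(mulnK 32 l20); apply: leq_div2r; lia.
  have hnm : (n <= (l + 2) * m.+1)%N.
    have := ltn_ceil (n - 1) l20; rewrite -/m; lia.
  have [s /andP [hs1 hs2]] := @isqrt_ex 32 m isT.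
  have s1 : (1 <= s)%N.
    by case: s hs1 hs2 => // ; rewrite !muln1 => _ h; move: (leq_ltn_trans m32 h); rewrite ltnn.
  set K := (m %/ (2 * s))%N.
  have [cA cB _] := hcard n.
  have [dAB _ _] := hdisj n.
  have hK1 : (2 * K * s <= #|A n|)%N.
    rewrite cA; apply: leq_trans (leq_trunc_div m (2 * s)); rewrite -/K; lia.
  have hK2 : (2 * m <= K * K)%N by apply: Kfact.
  have [P [Q [PA QA Pinj Qinj PQ]]] := @build n (A n) K s (Ordinal n0) hK1.
  set p := (n%:R : R) `^ (- alpha).
  have p01 := hp01 n n0.
  have [p0 p1] := andP p01.
  have hb := @bound R p n m (A n) (B n) K s P Q p01 cB dAB PA QA Pinj Qinj PQ hK2.
  set X := (1 - p) ^+ s *+ #|{: 'I_K + ('I_K * 'I_s * 'I_K)}| in hb.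
  have X0 : 0 <= X by apply: mulrn_wge0; apply: exprn_ge0; rewrite subr_ge0.
  have Km : (K <= m)%N by rewrite /K leq_div.
  have sm : (s <= m)%N by apply: leq_trans hs1; apply: sq_le.
  have mn : (m <= n)%N by rewrite /m; apply: leq_trans (leq_div _ _) _; apply: leq_subr.
  have cJ : (#|{: 'I_K + ('I_K * 'I_s * 'I_K)}| <= 2 * n ^ 3)%N.
    rewrite card_sum !card_prod !card_ord.
    have Kn : (K <= n)%N by apply: leq_trans mn.
    have sn : (s <= n)%N by apply: leq_trans mn.
    exact: cJ_bound.
  have hX : X * (2 ^ (l + 4))%:R <= 1.
    have h1 : X <= (1 - p) ^+ s *+ (2 * n ^ 3).
      by apply: ler_wpMn2l => //; apply: exprn_ge0; rewrite subr_ge0.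
    have h2 := @real_est R alpha l q n s m a0 hq isT n0
      (@nm_bound l m n (leq_trans (isT : (1 <= 32)%N) m32) hnm) (@ms_bound m s s1 hs2) hN1.
    apply: le_trans h2; rewrite -/p.
    apply: le_trans (ler_wpM2r (ler0n _ _) h1) _.
    rewrite le_eqVlt; apply/orP; left; apply/eqP.
    have -> : (2 ^ (l + 5) = 2 * 2 ^ (l + 4))%N by rewrite -expnS addnS.
    rewrite !natrM !natrX; ring.
  have hXm : X ^+ m * (2 ^ ((l + 4) * m))%:R <= 1.
    rewrite expnM natrX -exprMn; apply: exprn_ile1 => //.
    by apply: mulr_ge0 => //; apply: ler0n.
  have hnat := @natfact l m n hnm.
  apply: le_trans (ler_wpM2r (ler0n _ _) hb) _.
  have -> : (2 ^ n)%:R * X ^+ m * n.+1%:R = X ^+ m * (2 ^ n * n.+1)%:R.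
    by rewrite natrM; ring.
  apply: le_trans (ler_wpM2l (exprn_ge0 _ X0) (_ : _ <= C1 * (2 ^ ((l + 4) * m))%:R)) _.
    by rewrite /C1 -natrM ler_nat.
  rewrite mulrCA -[X in _ <= X]mulr1.
  by apply: ler_wpM2l => //; apply: ler0n.
apply: (squeeze_cvgr (f := fun n => 1 - C1 * harmonic n) (h := fun=> 1)).
- exists (maxn N1 (32 * (l + 2) + 2)) => // n /= hn.
  have h := ev n hn.
  have n0 : (0 < n)%N by move: hn; rewrite geq_max => /andP [_ h2]; apply: leq_trans h2; rewrite addn2.
  set Qn := perc_prob _ (predC (event4 _ _ _)) in h.
  have p01 := hp01 n n0.
  have -> : perc_prob ((n%:R : R) `^ (- alpha)) (event4 ((n - 1) %/ (l + 2))%N (A n) (B n)) = 1 - Qn.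
    by apply: pp_compl.
  have Q0 : 0 <= Qn by apply: pp_ge0.
  apply/andP; split; last by rewrite gerBl.
  rewrite lerD2l lerN2 /harmonic /=.
  by rewrite ler_pdivlMr.
- rewrite -[X in (_ --> X)%classic](subr0 (1 : R)) -[X in _ - X](mulr0 C1).
  apply: cvgB; first exact: cvg_cst.
  apply: cvgM; [exact: cvg_cst | exact: cvg_harmonic].
- exact: cvg_cst.
Qed.
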